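(* Let $V$ be a finite ground set with $n=|V|$, let $f:2^V\to\mathbb{R}_{\ge 0}$ be monotone submodular, let $k\ge 1$ be an integer with $n\ge 16k$, and let $OPT=\max_{A\subseteq V,|A|\le k} f(A)$. Let $\tau=\frac{OPT}{2k}$. Draw a random set $S\subseteq V$ containing each element independently with probability $p=4\sqrt{k/n}$, and partition $V$ at random into sets $V_1,\dots,V_m$. Let $G_0=\textsc{ThresholdGreedy}(S,\emptyset,\tau)$, and for each $i$ let $R_i=\textsc{ThresholdFilter}(V_i,G_0,\tau)$ if $|G_0|<k$ and $R_i=\emptyset$ otherwise (the sets $R_i$ are the elements sent to the central machine). Then there is an absolute constant $c>0$ such that, with probability at least $1-e^{-ck}$, the number of elements sent to the central machine satisfies $\big|\bigcup_{i=1}^m R_i\big|\le\sqrt{nk}$.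
   Context: A function $f:2^V\to\mathbb{R}_{\ge0}$ is submodular if $f(A\cup\{e\})-f(A)\ge f(B\cup\{e\})-f(B)$ for all $A\subseteq B\subseteq V$ and $e\notin B$, and monotone if $f(A\cup\{e\})-f(A)\ge 0$ for all $A$ and $e\notin A$. For $A\subseteq V$, $e\in V$ write $f_A(e)=f(A\cup\{e\})-f(A)$. Fix a total order on $V$; all sets are scanned in this order. $\textsc{ThresholdGreedy}(T,G,\tau)$: start with $G'=G$; scan $e\in T$ in the fixed order, and whenever $f_{G'}(e)\ge\tau$ and $|G'|<k$, add $e$ to $G'$; return $G'$. $\textsc{ThresholdFilter}(T,G,\tau)$ returns $\{e\in T: f_G(e)\ge\tau\}$. Here $m$ is the number of machines (the paper takes $m=\sqrt{n/k}$). *)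

(* Defs.v *)
From HB Require Import structures.
From mathcomp Require Import all_boot all_order all_algebra.
From mathcomp Require Import all_classical all_reals all_analysis.
Set Implicit Arguments. Unset Strict Implicit. Unset Printing Implicit Defensive.
Import Order.TTheory GRing.Theory Num.Theory.
Local Open Scope ring_scope.

Section Defs.
Variables (R : realType) (V : finType).

Definition marg (f : {set V} -> R) (A : {set V}) (e : V) : R :=
  f (e |: A) - f A.

Definition nonneg_setfun (f : {set V} -> R) : Prop := forall A, 0 <= f A.

Definition monotone_setfun (f : {set V} -> R) : Prop :=
  forall (A : {set V}) (e : V), e \notin A -> 0 <= marg f A e.

Definition submodular (f : {set V} -> R) : Prop :=
  forall (A B : {set V}) (e : V), A \subset B -> e \notin B ->
    marg f B e <= marg f A e.

(* OPT = max_{|A| <= k} f A  (f is nonnegative, so the 0 default is harmless) *)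
Definition OPT (f : {set V} -> R) (k : nat) : R :=
  \big[Num.max/0]_(A : {set V} | (#|A| <= k)%N) f A.

(* the fixed total order on V is given by a duplicate-free enumeration [ord];
   a set T is scanned as the subsequence of [ord] of elements of T *)
Definition scan (ord : seq V) (T : {set V}) : seq V := [seq e <- ord | e \in T].

Definition threshold_greedy (f : {set V} -> R) (k : nat) (ord : seq V)
    (T G : {set V}) (tau : R) : {set V} :=
  foldl (fun G' e => if (tau <= marg f G' e) && (#|G'| < k)%N then e |: G' else G')
        G (scan ord T).

Definition threshold_filter (f : {set V} -> R) (T G : {set V}) (tau : R) : {set V} :=
  [set e in T | tau <= marg f G e].

(* probability of an event on the random set S, where S contains each element
   independently with probability p *)
Definition prob_sample (p : R) (E : {set V} -> bool) : R :=
  \sum_(S : {set V} | E S) p ^+ #|S| * (1 - p) ^+ (#|V| - #|S|).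

End Defs.

(* Main.v *)
Require Import Defs.
From HB Require Import structures.
From mathcomp Require Import all_boot all_order all_algebra.
From mathcomp Require Import all_classical all_reals all_analysis.
From mathcomp Require Import ring lra.
Import Order.TTheory GRing.Theory Num.Theory.
Local Open Scope ring_scope.

Set Implicit Arguments. Unset Strict Implicit. Unset Printing Implicit Defensive.
Module Aux.
Import fintype finset.
Section Ex.
Variables (R : realType) (V : finType) (p : R).

Fixpoint Ex (l : seq V) (h : {set V} -> R) : R :=
  match l with
  | [::] => h finset.set0
  | x :: l' => p * Ex l' (fun S => h (x |: S)) + (1 - p) * Ex l' h
  end.

Lemma Ex_sum l h : uniq l -> Ex l h =
  \sum_(S : {set V} | S \subset [set x in l])
     p ^+ #|S| * (1 - p) ^+ (size l - #|S|) * h S.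
Proof.
elim: l h => [|x l IH] h /=.
  move=> _; rewrite (big_pred1 finset.set0) ?cards0 ?expr0 ?mul1r //.
  by move=> S /=; rewrite finset.subset0; apply/eqP/eqP => ->; apply/setP=> y; rewrite !inE.
case/andP=> xl ul; rewrite !IH //.
have -> : [set y in x :: l] = x |: [set y in l].
  by apply/setP => y; rewrite !inE.
rewrite [RHS](bigID (fun S : {set V} => x \in S)) /=.
congr (_ + _)%R.
- rewrite mulr_sumr [RHS](reindex_onto (fun S => x |: S) (fun S => S :\ x)); last first.
    by move=> S /andP[_ xS]; rewrite finset.setD1K.
  apply: eq_big => S.
    apply/idP/idP; last first.
      case/andP=> /andP[sub _] /eqP eS.
      have nx : x \notin S by rewrite -eS !inE eqxx.
      apply/subsetP => y yS.
      have := subsetP sub y; rewrite !inE yS orbT => /(_ isT) /orP[/eqP eyx|//].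
      by move: nx; rewrite -eyx yS.
    move=> sub; have nx : x \notin S.
      by apply/negP=> xS; have := subsetP sub x xS; rewrite inE (negbTE xl).
    by rewrite setU1K // eqxx setU11 !andbT; exact: finset.setUS.
  move=> sub; have nx : x \notin S.
    by apply/negP=> xS; have := subsetP sub x xS; rewrite inE (negbTE xl).
  by rewrite cardsU1 nx add1n subSS exprS !mulrA.
- rewrite mulr_sumr; apply: eq_big => S.
    apply/idP/andP => [sub|[sub nx]]; last first.
      apply/subsetP => y yS; have := subsetP sub y yS; rewrite !inE.
      by case/orP=> // /eqP ey; rewrite -ey yS in nx.
    split; first by apply: (subset_trans sub); apply: finset.subsetUr.
    by apply/negP=> xS; have := subsetP sub x xS; rewrite inE (negbTE xl).
  move=> sub.
  have -> : ((size l).+1 - #|S|)%N = ((size l - #|S|).+1)%N.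
    rewrite subSn //; apply: leq_trans (subset_leq_card sub) _.
    by rewrite cardsE (card_uniqP ul).
  by rewrite exprS !mulrA [_ * (1 - p)]mulrC -!mulrA.
Qed.

Lemma eq_Ex_in l (h1 h2 : {set V} -> R) :
  (forall S : {set V}, S \subset [set x in l] -> h1 S = h2 S) ->
  Ex l h1 = Ex l h2.
Proof.
elim: l h1 h2 => [|x l IH] h1 h2 /= H.
  by apply: H; rewrite finset.sub0set.
congr (_ * _ + _ * _)%R; apply: IH => S sub; apply: H.
  apply/subsetP=> y; rewrite !inE => /orP[->//|yS].
  by have := subsetP sub y yS; rewrite inE => ->; rewrite orbT.
by apply/subsetP=> y yS; have := subsetP sub y yS; rewrite !inE => ->; rewrite orbT.
Qed.

Lemma Ex_scale l a h : Ex l (fun S => a * h S) = a * Ex l h.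
Proof.
elim: l h => [|x l IH] h //=.
by rewrite (IH (fun S => h (x |: S))) IH mulrDr !mulrA [p * a]mulrC [(1 - p) * a]mulrC.
Qed.

Lemma Ex_const l c : Ex l (fun _ => c) = c.
Proof. by elim: l => [|x l IH] //=; rewrite IH -mulrDl addrC subrK mul1r. Qed.

End Ex.

Section Run.
Variables (R : realType) (V : finType) (f : {set V} -> R) (k : nat) (tau : R).

Definition cand (G : {set V}) (x : V) : bool := (tau <= marg f G x) && (#|G| < k)%N.
Definition nxt (S G : {set V}) (x : V) := if (x \in S) && cand G x then x |: G else G.
Fixpoint runG (l : seq V) (G S : {set V}) : {set V} :=
  if l is x :: l' then runG l' (nxt S G x) S else G.
Fixpoint runX (l : seq V) (G S : {set V}) : nat :=
  if l is x :: l' then (cand G x + runX l' (nxt S G x) S)%N else 0%N.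
Fixpoint runA (l : seq V) (G S : {set V}) : nat :=
  if l is x :: l' then (((x \in S) && cand G x) + runA l' (nxt S G x) S)%N else 0%N.

Lemma greedy_run ord S G :
  threshold_greedy f k ord S G tau = runG ord G S.
Proof.
rewrite /threshold_greedy /scan.
elim: ord G => [|x l IH] G //=.
rewrite /nxt /cand; case: (x \in S) => /=; rewrite IH //.
Qed.

Lemma nxt_loc x y S G : y != x -> nxt (y |: S) G x = nxt S G x.
Proof. by move=> yx; rewrite /nxt !inE eq_sym (negbTE yx). Qed.

Lemma run_loc l y S G : y \notin l ->
  [/\ runG l G (y |: S) = runG l G S, runX l G (y |: S) = runX l G S
    & runA l G (y |: S) = runA l G S].
Proof.
elim: l G => [|x l IH] G //=; rewrite inE negb_or => /andP[yx yl].
rewrite nxt_loc //; have [-> -> ->] := IH (nxt S G x) yl.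
by rewrite !inE eq_sym (negbTE yx).
Qed.

Lemma run_sub l (G S : {set V}) : G \subset runG l G S.
Proof.
elim: l G => [|x l IH] G //=; apply: subset_trans (IH _).
by rewrite /nxt; case: ifP => // _; apply: finset.subsetUr.
Qed.

Lemma run_notin l (G S : {set V}) y : y \notin l -> y \notin G -> y \notin runG l G S.
Proof.
elim: l G => [|x l IH] G //=; rewrite inE negb_or => /andP[yx yl] yG.
apply: IH => //; rewrite /nxt; case: ifP => // _.
by rewrite !inE negb_or yx.
Qed.

Hypothesis subm : submodular f.

Lemma run_main l (G S : {set V}) : uniq l -> (forall y, y \in l -> y \notin G) ->
  (#|runG l G S| < k)%N ->
  (#|[set e in l | (tau <= marg f (runG l G S) e)%R]| <= runX l G S)%N /\ (runA l G S + #|G| = #|runG l G S|)%N.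
Proof.
elim: l G => [|x l IH] G /=.
  move=> _ _ _; split => //; rewrite leqn0 cards_eq0; apply/eqP/setP => y.
  by rewrite !inE.
case/andP=> xl ul disj klt.
have xG : x \notin G by apply: disj; rewrite inE eqxx.
have disj' : forall y, y \in l -> y \notin nxt S G x.
  move=> y yl; rewrite /nxt; case: ifP => _; last by apply: disj; rewrite inE yl orbT.
  rewrite !inE negb_or disj ?inE ?yl ?orbT // andbT.
  by apply/eqP=> eyx; rewrite -eyx yl in xl.
have [IH1 IH2] := IH _ ul disj' klt.
set Gf := runG l (nxt S G x) S in klt IH1 IH2 *.
split; last first.
  rewrite -IH2 /nxt; case: ifP => /= c; last by rewrite add0n.
  by rewrite cardsU1 xG add1n addSn addnS.
have GGf : G \subset Gf.
  apply: subset_trans (run_sub _ _ _); rewrite /nxt; case: ifP => // _.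
  exact: finset.subsetUr.
case Px: (tau <= marg f Gf x); last first.
  apply: leq_trans (leq_addl _ _); apply: leq_trans IH1.
  apply: subset_leq_card; apply/subsetP => y; rewrite !inE.
  case/andP=> /orP[/eqP ->|yl] Py; first by rewrite Px in Py.
  by rewrite yl.
have cx : cand G x.
  rewrite /cand (leq_ltn_trans (subset_leq_card GGf) klt) andbT.
  case xGf : (x \in Gf).
    have : x \in nxt S G x.
      apply/negP => xn; have := @run_notin l (nxt S G x) S x xl (introN idP xn).
      by rewrite -/Gf xGf.
    rewrite /nxt; case: ifP => [/andP[_ /andP[]] //|_ xG']; by rewrite xG' in xG.
  apply: le_trans Px _; apply: subm => //; by rewrite xGf.
rewrite cx add1n; apply: leq_trans (_ : #|x |: [set e in l | (tau <= marg f Gf e)%R]| <= _)%N.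
  apply: subset_leq_card; apply/subsetP => y; rewrite !inE.
  by case/andP=> /orP[->//|->] ->; rewrite orbT.
by rewrite cardsU1 -add1n; apply: leq_add => //; case: (_ \notin _).
Qed.

End Run.
Section Exp.
Variables (R : realType) (V : finType) (f : {set V} -> R) (k : nat) (tau p : R).
Hypothesis p0 : 0 <= p.
Hypothesis p1 : p <= 1.

Definition q := 1 - p / 2.
Definition Phi l G S : R :=
  (2^-1) ^+ runA f k tau l G S / q ^+ runX f k tau l G S.

Lemma q_gt0 : 0 < q.
Proof. have h1 := p1; have h0 := p0; rewrite /q subr_gt0 ltr_pdivrMr //; lra. Qed.

Lemma Phi_cons x l G S : Phi (x :: l) G S =
  (2^-1) ^+ ((x \in S) && cand f k tau G x) / q ^+ (cand f k tau G x) *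
  Phi l (nxt f k tau S G x) S.
Proof.
rewrite /Phi /= !exprD invfM; set a := (_ ^+ _); set b := (_ ^+ _); set c := (_ ^+ _).
by rewrite mulrACA.
Qed.

Lemma Ex_Phi l G : uniq l -> Ex p l (Phi l G) <= 1.
Proof.
elim: l G => [|x l IH] G /=.
  by move=> _; rewrite /Phi /= expr0 divr1.
case/andP=> xl ul.
rewrite (@eq_Ex_in R V p l (fun S => Phi (x :: l) G (x |: S))
   ( fun S => (2^-1) ^+ cand f k tau G x / q ^+ cand f k tau G x *
        Phi l (if cand f k tau G x then x |: G else G) S)); last first.
  move=> S sub; rewrite Phi_cons setU11 /=; congr (_ * _).
  rewrite /nxt setU11 /=; rewrite /Phi.
  by have [_ -> ->] := @run_loc R V f k tau l x S (if cand f k tau G x then x |: G else G) xl.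
rewrite (@eq_Ex_in R V p l (fun S => Phi (x :: l) G S)
   ( fun S => 1 / q ^+ cand f k tau G x * Phi l G S)); last first.
  move=> S sub; have xS : x \notin S.
    by apply/negP => xS; have := subsetP sub x xS; rewrite inE (negbTE xl).
  by rewrite Phi_cons (negbTE xS) /= expr0 /nxt (negbTE xS).
rewrite !Ex_scale.
have E1 := IH (if cand f k tau G x then x |: G else G) ul.
have E2 := IH G ul.
have qp := q_gt0.
case: (cand f k tau G x) E1 => E1; rewrite /= ?expr1 ?expr0 ?divr1.
  apply: (@le_trans _ _ (p * (2^-1 / q) + (1 - p) * (1 / q))).
    apply: lerD; rewrite ler_wpM2l ?subr_ge0 //; rewrite -[X in _ <= X]mulr1 ler_wpM2l //.
      by rewrite divr_ge0 // ltW.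
    by rewrite divr_ge0 // ltW.
  rewrite !mulrA -mulrDl mulr1 ler_pdivrMr // mul1r /q; lra.
by rewrite !mul1r -mulrDl addrC subrK mul1r.
Qed.

End Exp.
Lemma final_bound (R : realType) (V : finType) (f : {set V} -> R) k tau (p : R)
    (ord : seq V) (good : {set V} -> bool) :
  0 <= p -> p <= 1 -> uniq ord -> (forall x, x \in ord) ->
  (forall S, ~~ good S -> expR k%:R <= Phi f k tau p ord finset.set0 S) ->
  1 - expR (- k%:R) <= prob_sample p good.
Proof.
move=> p0 p1 uo allo bad.
have sizeo : size ord = #|V|.
  rewrite -(card_uniqP uo); apply: eq_card => x; by rewrite allo.
have sT : [set x in ord] = [set: V].
  by apply/setP => x; rewrite !inE allo.
pose w (S : {set V}) := p ^+ #|S| * (1 - p) ^+ (#|V| - #|S|).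
have conv h : Ex p ord h = \sum_(S : {set V}) w S * h S.
  rewrite Ex_sum // sT sizeo; apply: eq_bigl => S; exact: finset.subsetT.
have tot : \sum_(S : {set V}) w S = 1.
  by rewrite -(Ex_const p ord 1) conv; apply: eq_bigr => S _; rewrite mulr1.
have wge0 S : 0 <= w S by rewrite /w mulr_ge0 // exprn_ge0 // subr_ge0.
have qp := q_gt0 p0 p1.
have Phige0 S : 0 <= Phi f k tau p ord finset.set0 S.
  by rewrite /Phi divr_ge0 // exprn_ge0 // ltW.
have Phi1 : \sum_(S : {set V}) w S * Phi f k tau p ord finset.set0 S <= 1.
  by rewrite -conv; apply: Ex_Phi.
set Pb := \sum_(S | ~~ good S) w S.
have -> : prob_sample p good = 1 - Pb.
  by rewrite -tot (bigID good) /= addrK.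
have Pbe : Pb * expR k%:R <= 1.
  apply: le_trans Phi1; rewrite /Pb mulr_suml.
  apply: le_trans (_ : \sum_(S | ~~ good S) w S * Phi f k tau p ord finset.set0 S <= _).
    by apply: ler_sum => S bS; rewrite ler_wpM2l // bad.
  rewrite [leRHS](bigID good) /= lerDr; apply: sumr_ge0 => S _.
  exact: mulr_ge0.
have : Pb <= expR (- k%:R).
  by rewrite expRN -[_^-1]mul1r ler_pdivlMr // expR_gt0.
lra.
Qed.

Lemma Phi_big (R : realType) (V : finType) (f : {set V} -> R) k tau (p : R)
    (ord : seq V) (S : {set V}) :
  submodular f -> 0 <= p -> p <= 1 -> uniq ord -> (forall x, x \in ord) ->
  p * Num.sqrt (#|V|%:R * k%:R) = 4 * k%:R ->
  (#|runG f k tau ord finset.set0 S| < k)%N ->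
  Num.sqrt (#|V|%:R * k%:R) <
    #|[set e | tau <= marg f (runG f k tau ord finset.set0 S) e]|%:R :> R ->
  expR k%:R <= Phi f k tau p ord finset.set0 S.
Proof.
move=> fsub p0 p1 uo allo hp klt hs.
have [h1 h2] := run_main fsub uo (fun y _ => negbT (finset.in_set0 y)) klt.
rewrite cards0 addn0 in h2.
have E : [set e in ord | tau <= marg f (runG f k tau ord finset.set0 S) e] =
          [set e | tau <= marg f (runG f k tau ord finset.set0 S) e].
  by apply/setP => e; rewrite !inE allo.
rewrite E in h1.
rewrite /Phi.
set A := runA f k tau ord finset.set0 S in h2 *.
set X := runX f k tau ord finset.set0 S in h1 *.
have XR : Num.sqrt (#|V|%:R * k%:R) < X%:R :> R.
  by apply: lt_le_trans hs _; rewrite ler_nat.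
have hX : 4 * k%:R <= p * X%:R :> R.
  by rewrite -hp ler_wpM2l // ltW.
have qp := q_gt0 p0 p1.
have qX : q p ^+ X <= expR (- (2 * k%:R)).
  have qe : q p <= expR (- (p / 2)) by rewrite /q; apply: expR_ge1Dx.
  apply: le_trans (_ : expR (- (p / 2)) ^+ X <= _).
    by apply: lerXn2r; rewrite // ?nnegrE ?expR_ge0 ?(ltW qp).
  rewrite -expRM_natl ler_expR; nra.
have AK : (A <= k)%N by rewrite h2 ltnW.
have e1 : expR (- k%:R) <= (2^-1 : R) ^+ A.
  apply: le_trans (_ : (2^-1 : R) ^+ k <= _); last first.
    by apply: ler_wiXn2l => //; rewrite invf_le1 // ler1n.
  rewrite exprVn expRN lef_pV2 ?posrE ?expR_gt0 ?exprn_gt0 //.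
  have e2 : (2 : R) <= expR 1 by have := expR_ge1Dx (1 : R); rewrite -[1 + 1]/(2%:R).
  rewrite -[k%:R]mulr1 expRM_natl; apply: lerXn2r => //; rewrite nnegrE ?expR_ge0 //.
have e3 : expR (2 * k%:R) <= (q p ^+ X)^-1.
  rewrite -[(_ ^+ _)^-1]mul1r ler_pdivlMr ?exprn_gt0 //.
  apply: le_trans (_ : expR (2 * k%:R) * expR (- (2 * k%:R)) <= _).
    by rewrite ler_wpM2l ?expR_ge0.
  by rewrite -expRD addrN expR0.
have -> : expR k%:R = expR (- k%:R) * expR (2 * k%:R) :> R.
  by rewrite -expRD; congr expR; lra.
apply: ler_pM => //; exact: expR_ge0.
Qed.

End Aux.

Unset Implicit Arguments.

Theorem lemma2 (R : realType) :
  exists c : R, 0 < c /\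
  forall (V : finType) (f : {set V} -> R) (k : nat)
         (ord : seq V) (m : nat) (part : V -> 'I_m),
    nonneg_setfun f -> monotone_setfun f -> submodular f ->
    (1 <= k)%N -> (16 * k <= #|V|)%N ->
    uniq ord -> (forall x : V, x \in ord) ->
    let n := #|V| in
    let tau := OPT f k / (2 * k%:R) in
    let p : R := 4 * Num.sqrt (k%:R / n%:R) in
    prob_sample p (fun S : {set V} =>
      let G0 := threshold_greedy f k ord S (@finset.set0 V) tau in
      let Rset := fun i : 'I_m =>
        if (#|G0| < k)%N then threshold_filter f [set x | part x == i] G0 tau
        else @finset.set0 V in
      (#|\bigcup_(i < m) Rset i|%:R <= Num.sqrt (n%:R * k%:R) :> R))
    >= 1 - expR (- (c * k%:R)).
Proof.
exists 1; split; first exact: ltr01.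
move=> V f k ord m part _ _ fsub k1 kn uo allo; cbv zeta.
set n := #|V|. set tau := OPT f k / _. set p := 4 * Num.sqrt _.
have n0 : (0 < n)%N by apply: leq_trans kn; rewrite muln_gt0.
have nR : 0 < n%:R :> R by rewrite ltr0n.
have kR : 0 <= k%:R :> R by rewrite ler0n.
have p0 : 0 <= p by rewrite /p mulr_ge0 ?sqrtr_ge0.
have hp : p * Num.sqrt (n%:R * k%:R) = 4 * k%:R.
  rewrite /p -mulrA -sqrtrM ?divr_ge0 //.
  have -> : k%:R / n%:R * (n%:R * k%:R) = k%:R ^+ 2 :> R.
    by field; rewrite lt0r_neq0.
  by rewrite sqrtr_sqr ger0_norm.
have p1 : p <= 1.
  have : p ^+ 2 <= 1.
    rewrite /p exprMn sqr_sqrtr ?divr_ge0 // mulrA ler_pdivrMr // mul1r.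
    have : (16 * k)%:R <= n%:R :> R by rewrite ler_nat.
    rewrite natrM; lra.
  nra.
rewrite mul1r; apply: (Aux.final_bound (f := f) (tau := tau) (ord := ord)) => // S /=.
rewrite Aux.greedy_run.
case: (ltnP #|Aux.runG f k tau ord finset.set0 S| k) => klt.
  rewrite -real_ltNge ?realE ?sqrtr_ge0 ?ler0n // => hs.
  apply: Aux.Phi_big => //.
  apply: lt_le_trans hs _; rewrite ler_nat; apply: subset_leq_card.
  apply/bigcupsP => i _; apply/fintype.subsetP => e; rewrite /threshold_filter !inE.
  by case/andP.

have -> : \bigcup_(i < m) (@finset.set0 V) = finset.set0 by rewrite big1_eq.
by rewrite cards0 sqrtr_ge0.
Qed.
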